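(* Let $N\in\mathbb N$ be fixed. There exist constants $C,\alpha>0$ such that for every $T>0$ and every two solutions $u_1(t),u_2(t)$, $t\in[-T,0]$, of (E) with $u_1(t)-u_2(t)\in K^+$ for all $t\in[-T,0]$, one has $\|u_1(-T)-u_2(-T)\|^2_{H^{-1}}\le Ce^{\alpha T}\|P_Nu_1(0)-P_Nu_2(0)\|^2_{H^{-1}}.$
   Context: Let $H$ be a real separable Hilbert space with inner product $(\cdot,\cdot)$ and norm $\|\cdot\|_H$, and let $A:D(A)\to H$ be a linear self-adjoint positive operator with compact inverse, with orthonormal eigenbasis $\{e_n\}$, $Ae_n=\lambda_ne_n$, $0<\lambda_1\le\lambda_2\le\dots\to\infty$. For $s\ge0$, $H^s=D(A^{s/2})$ with $\|u\|_{H^s}^2=\sum_n\lambda_n^s|(u,e_n)|^2$; for $s<0$, $H^s$ is the completion of $H$ in this norm. $P_Nu=\sum_{n\le N}(u,e_n)e_n$, $Q_N=\mathrm{Id}-P_N$. $F:H\to H$ is globally bounded and globally Lipschitz with constant $L$. (E) is $\partial_tu+A^2u+AF(u)=0$. $V(\xi)=\|Q_N\xi\|^2_{H^{-1}}-\|P_N\xi\|^2_{H^{-1}}$, $K^+=\{\xi\in H^{-1}:V(\xi)\le0\}$. The constants $C,\alpha$ may depend on $N$, $A$, $L$ but not on $u_1,u_2,T$. *)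

(* Defs.v *)
From Stdlib Require Import Reals Lra List ClassicalEpsilon.
Open Scope R_scope.

Record HSpace := {
  hcar :> Type;
  hzero : hcar;
  hadd : hcar -> hcar -> hcar;
  hopp : hcar -> hcar;
  hscal : R -> hcar -> hcar;
  hip : hcar -> hcar -> R;
  hadd_assoc : forall x y z, hadd x (hadd y z) = hadd (hadd x y) z;
  hadd_comm : forall x y, hadd x y = hadd y x;
  hadd_zero : forall x, hadd x hzero = x;
  hadd_opp : forall x, hadd x (hopp x) = hzero;
  hscal_one : forall x, hscal 1 x = x;
  hscal_assoc : forall a b x, hscal a (hscal b x) = hscal (a * b) x;
  hscal_addv : forall a x y, hscal a (hadd x y) = hadd (hscal a x) (hscal a y);
  hscal_adds : forall a b x, hscal (a + b) x = hadd (hscal a x) (hscal b x);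
  hip_sym : forall x y, hip x y = hip y x;
  hip_add : forall x y z, hip (hadd x y) z = hip x z + hip y z;
  hip_scal : forall a x y, hip (hscal a x) y = a * hip x y;
  hip_pos : forall x, 0 <= hip x x;
  hip_def : forall x, hip x x = 0 -> x = hzero;
  hcomplete : forall s : nat -> hcar,
    (forall eps, eps > 0 -> exists N, forall m n, (m >= N)%nat -> (n >= N)%nat ->
        sqrt (hip (hadd (s m) (hopp (s n))) (hadd (s m) (hopp (s n)))) < eps) ->
    exists l, forall eps, eps > 0 -> exists N, forall n, (n >= N)%nat ->
        sqrt (hip (hadd (s n) (hopp l)) (hadd (s n) (hopp l))) < eps
}.

Arguments hzero {h}.
Arguments hadd {h}.
Arguments hopp {h}.
Arguments hscal {h}.
Arguments hip {h}.

Definition hsub {H : HSpace} (x y : H) : H := hadd x (hopp y).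
Definition hnorm {H : HSpace} (x : H) : R := sqrt (hip x x).

(** Value of a convergent series sum_{n>=0} f n (chosen by classical
    description; meaningful whenever the series converges). *)
Definition series (f : nat -> R) : R :=
  epsilon (inhabits 0) (fun l => infinite_sum f l).

(** (e, lam): orthonormal eigenbasis e_n of A, with A e_n = lam_n e_n,
    0 < lam_0 <= lam_1 <= ... -> +infinity.  (Indices start at 0.) *)
Definition orthonormal_basis {H : HSpace} (e : nat -> H) : Prop :=
  (forall i j, hip (e i) (e j) = if Nat.eqb i j then 1 else 0) /\
  (forall u : H, infinite_sum (fun n => (hip u (e n)) ^ 2) (hip u u)).

Definition eigenvalue_seq (lam : nat -> R) : Prop :=
  (forall n, 0 < lam n) /\ (forall n, lam n <= lam (S n)) /\
  (forall M, exists n0, forall n, (n >= n0)%nat -> M < lam n).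

Definition hm1sq {H : HSpace} (e : nat -> H) (lam : nat -> R) (u : H) : R :=
  series (fun n => (hip u (e n)) ^ 2 / lam n).

(** P_N u = sum_{n <= N} (u,e_n) e_n  (1-based in the paper; here the
    first N basis vectors e_0, ..., e_{N-1}). *)
Definition PN {H : HSpace} (e : nat -> H) (N : nat) (u : H) : H :=
  fold_right (fun n acc => hadd (hscal (hip u (e n)) (e n)) acc) hzero (seq 0 N).

Definition QN {H : HSpace} (e : nat -> H) (N : nat) (u : H) : H :=
  hsub u (PN e N u).

Definition Vfun {H : HSpace} (e : nat -> H) (lam : nat -> R) (N : nat) (xi : H) : R :=
  hm1sq e lam (QN e N xi) - hm1sq e lam (PN e N xi).

Definition in_Kplus {H : HSpace} (e : nat -> H) (lam : nat -> R) (N : nat) (xi : H) : Prop :=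
  Vfun e lam N xi <= 0.

Definition globally_bounded {H : HSpace} (F : H -> H) : Prop :=
  exists M, forall u, hnorm (F u) <= M.

Definition lipschitz_with {H : HSpace} (F : H -> H) (L : R) : Prop :=
  forall u v, hnorm (hsub (F u) (F v)) <= L * hnorm (hsub u v).

(** u is a solution of (E): d/dt u + A^2 u + A F(u) = 0 on [-T,0]:
    u is continuous [-T,0] -> H and the equation holds in each coordinate
    (weak/Galerkin form): d/dt (u,e_n) = -lam_n^2 (u,e_n) - lam_n (F(u),e_n)
    on (-T,0). *)
Definition is_solution {H : HSpace} (e : nat -> H) (lam : nat -> R) (F : H -> H)
    (T : R) (u : R -> H) : Prop :=
  (forall t, -T <= t <= 0 -> forall eps, eps > 0 -> exists delta, delta > 0 /\
      forall s, -T <= s <= 0 -> Rabs (s - t) < delta -> hnorm (hsub (u s) (u t)) < eps) /\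
  (forall n t, -T < t < 0 ->
      derivable_pt_lim (fun s => hip (u s) (e n)) t
        (- (lam n) ^ 2 * hip (u t) (e n) - lam n * hip (F (u t)) (e n))).

(* Main.v *)
Require Import Defs.
From Stdlib Require Import Reals Lra Lia Psatz List ClassicalEpsilon.
Open Scope R_scope.

Section HS.
Context {H : HSpace}.
Implicit Types x y z : H.

Lemma hip_zero_l z : hip (@hzero H) z = 0.
Proof.
  pose proof (hip_add H hzero hzero z) as E. rewrite hadd_zero in E. lra.
Qed.
Lemma hip_opp_l y z : hip (hopp y) z = - hip y z.
Proof.
  pose proof (hip_add H y (hopp y) z) as E. rewrite hadd_opp, hip_zero_l in E. lra.
Qed.
Lemma hip_sub_l x y z : hip (hsub x y) z = hip x z - hip y z.
Proof. unfold hsub. rewrite hip_add, hip_opp_l. ring. Qed.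
Lemma hip_sub_r x y z : hip z (hsub x y) = hip z x - hip z y.
Proof. rewrite hip_sym, hip_sub_l, (hip_sym _ x), (hip_sym _ y). ring. Qed.
Lemma hip_zero_r z : hip z (@hzero H) = 0.
Proof. rewrite hip_sym; apply hip_zero_l. Qed.
Lemma hip_add_r x y z : hip z (hadd x y) = hip z x + hip z y.
Proof. rewrite hip_sym, hip_add, (hip_sym _ x), (hip_sym _ y). ring. Qed.
Lemma hip_scal_r a x y : hip y (hscal a x) = a * hip y x.
Proof. rewrite hip_sym, hip_scal, hip_sym. ring. Qed.

Lemma hsub_self x : hsub x x = hzero.
Proof. apply hadd_opp. Qed.

Lemma CS2 x y : (hip x y)^2 <= hip x x * hip y y.
Proof.
  destruct (Req_dec (hip y y) 0) as [E|E].
  - apply hip_def in E. subst y. rewrite !hip_zero_r. pose proof (hip_pos H x). nra.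
  - pose proof (hip_pos H y) as Py.
    assert (d : 0 < hip y y) by lra.
    set (t := - hip x y / hip y y).
    pose proof (hip_pos H (hadd x (hscal t y))) as P.
    rewrite hip_add, !hip_add_r, !hip_scal, !hip_scal_r in P.
    rewrite (hip_sym _ y x) in P.
    assert (E2 : hip x x * hip y y - hip x y ^ 2 =
       hip y y * (hip x x + t * hip x y + (t * hip x y + t * (t * hip y y)))).
    { unfold t. field. lra. }
    nra.
Qed.

Lemma CS x y : Rabs (hip x y) <= hnorm x * hnorm y.
Proof.
  unfold hnorm. rewrite <- sqrt_mult by apply hip_pos.
  rewrite <- sqrt_Rsqr_abs. apply sqrt_le_1_alt. unfold Rsqr. pose proof (CS2 x y). nra.
Qed.

Lemma hnorm_nonneg x : 0 <= hnorm x.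
Proof. apply sqrt_pos. Qed.
Lemma hnorm_sq x : hnorm x * hnorm x = hip x x.
Proof. apply sqrt_sqrt, hip_pos. Qed.

Lemma hip_sub_sub (a b : H) : hip (hsub a b) (hsub a b) = hip a a - 2 * hip a b + hip b b.
Proof. rewrite !hip_sub_l, !hip_sub_r, (hip_sym H b a). ring. Qed.

End HS.

Fixpoint ssum (f : nat -> R) (M : nat) : R :=
  match M with O => 0 | S k => ssum f k + f k end.

Lemma ssum_ext f g M : (forall n, (n < M)%nat -> f n = g n) -> ssum f M = ssum g M.
Proof. induction M; simpl; intros; auto. rewrite IHM by (intros; apply H; lia). rewrite H by lia. auto. Qed.
Lemma ssum_le f g M : (forall n, (n < M)%nat -> f n <= g n) -> ssum f M <= ssum g M.
Proof. induction M; simpl; intros; [lra|]. assert (f M <= g M) by (apply H; lia).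
  assert (ssum f M <= ssum g M) by (apply IHM; intros; apply H; lia). lra. Qed.
Lemma ssum_plus f g M : ssum (fun n => f n + g n) M = ssum f M + ssum g M.
Proof. induction M; simpl; [lra|]. rewrite IHM; ring. Qed.
Lemma ssum_scal a f M : ssum (fun n => a * f n) M = a * ssum f M.
Proof. induction M; simpl; [lra|]. rewrite IHM; ring. Qed.
Lemma ssum_nonneg f M : (forall n, 0 <= f n) -> 0 <= ssum f M.
Proof. intros. induction M; simpl; [lra|]. specialize (H M). lra. Qed.
Lemma ssum_mono f M M' : (forall n, 0 <= f n) -> (M <= M')%nat -> ssum f M <= ssum f M'.
Proof. intros Hf Hle. induction Hle; simpl; [lra|]. specialize (Hf m). lra. Qed.
Lemma ssum_zero_beyond f N M : (forall n, (N <= n)%nat -> f n = 0) -> (N <= M)%nat -> ssum f M = ssum f N.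
Proof. intros Hf Hle. induction Hle; simpl; auto. rewrite Hf by lia. lra. Qed.
Lemma ssum_split f N M : (N <= M)%nat ->
  ssum (fun n => if (n <? N)%nat then f n else 0) M = ssum f N.
Proof. intros Hle. rewrite (ssum_zero_beyond _ N M); auto.
  - apply ssum_ext. intros. destruct (Nat.ltb_spec n N); auto; lia.
  - intros. destruct (Nat.ltb_spec n N); auto; lia. Qed.
Lemma sum_f_R0_ssum f n : sum_f_R0 f n = ssum f (S n).
Proof. induction n; simpl; [lra|]. rewrite IHn. simpl. auto. Qed.

Lemma series_spec f l : infinite_sum f l -> series f = l.
Proof. intros Hl. unfold series. apply (uniqueness_sum f).
  - apply (epsilon_spec (inhabits 0) (fun l => infinite_sum f l)). exists l; auto.
  - auto. Qed.

Lemma series_props f B : (forall n, 0 <= f n) -> (forall M, ssum f M <= B) ->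
  (forall M, ssum f M <= series f) /\ series f <= B.
Proof.
  intros Hf HB.
  assert (Hg : Un_growing (sum_f_R0 f)).
  { intro n. rewrite !sum_f_R0_ssum. simpl. specialize (Hf (S n)). lra. }
  destruct (growing_cv (sum_f_R0 f) Hg) as [l Hl].
  { exists B. intros x [n ->]. rewrite sum_f_R0_ssum. auto. }
  assert (Hs : series f = l) by (apply series_spec; exact Hl).
  rewrite Hs. split.
  - intros M. destruct M. simpl. pose proof (growing_ineq _ _ Hg Hl 0). rewrite sum_f_R0_ssum in H. simpl in H. specialize (Hf 0%nat). lra.
    pose proof (growing_ineq _ _ Hg Hl M). rewrite sum_f_R0_ssum in H. auto.
  - destruct (Rle_dec l B) as [|Hn]; auto. exfalso.
    destruct (Hl (l - B)) as [N HN]; [lra|]. specialize (HN N (le_n _)).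
    rewrite sum_f_R0_ssum in HN. specialize (HB (S N)). unfold Rdist in HN.
    apply Rabs_def2 in HN. lra.
Qed.

Lemma parseval_partial {H : HSpace} (e : nat -> H) x M :
  orthonormal_basis e -> ssum (fun n => hip x (e n) ^ 2) M <= hip x x.
Proof.
  intros [_ Hp]. specialize (Hp x).
  assert (Hg : Un_growing (sum_f_R0 (fun n => hip x (e n) ^ 2))).
  { intro n. rewrite !sum_f_R0_ssum. simpl. pose proof (pow2_ge_0 (hip x (e (S n)))). lra. }
  destruct M. simpl. apply hip_pos.
  pose proof (growing_ineq _ _ Hg Hp M). rewrite sum_f_R0_ssum in H0. auto.
Qed.

Lemma fold_coord {H : HSpace} (e : nat -> H) (x : H) n len : forall a,
  (forall i j, hip (e i) (e j) = if Nat.eqb i j then 1 else 0) ->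
  hip (fold_right (fun k acc => hadd (hscal (hip x (e k)) (e k)) acc) hzero (seq a len)) (e n)
  = if (Nat.leb a n && Nat.ltb n (a + len))%bool then hip x (e n) else 0.
Proof.
  induction len; intros a Ho; simpl.
  - rewrite hip_zero_l. destruct (Nat.leb_spec a n); destruct (Nat.ltb_spec n (a+0)); simpl; auto; lia.
  - rewrite hip_add, hip_scal, Ho, IHlen by auto.
    destruct (Nat.eqb_spec a n).
    + subst. destruct (Nat.leb_spec (S n) n); [lia|]. destruct (Nat.leb_spec n n); [|lia].
      destruct (Nat.ltb_spec n (n + S len)); [|lia]. simpl. ring.
    + destruct (Nat.leb_spec (S a) n); destruct (Nat.ltb_spec n (S a + len));
      destruct (Nat.leb_spec a n); destruct (Nat.ltb_spec n (a + S len)); simpl; try lia; ring.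
Qed.

Lemma PN_coord {H : HSpace} (e : nat -> H) N x n : orthonormal_basis e ->
  hip (PN e N x) (e n) = if (n <? N)%nat then hip x (e n) else 0.
Proof.
  intros [Ho _]. unfold PN. rewrite fold_coord by auto.
  destruct (Nat.leb_spec 0 n); [|lia]. simpl. auto.
Qed.

Lemma QN_coord {H : HSpace} (e : nat -> H) N x n : orthonormal_basis e ->
  hip (QN e N x) (e n) = if (n <? N)%nat then 0 else hip x (e n).
Proof.
  intros Ho. unfold QN. rewrite hip_sub_l, PN_coord by auto.
  destruct (n <? N)%nat; ring.
Qed.

Lemma lam_ge0 lam : eigenvalue_seq lam -> forall n, lam 0%nat <= lam n.
Proof. intros [_ [Hm _]] n. induction n; [lra|]. specialize (Hm n). lra. Qed.

Section HM.
Context {H : HSpace} (e : nat -> H) (lam : nat -> R) (N : nat).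
Hypothesis Ho : orthonormal_basis e.
Hypothesis Hl : eigenvalue_seq lam.

Lemma lam_pos n : 0 < lam n.
Proof. destruct Hl as [P _]. apply P. Qed.

Lemma term_nonneg (z : H) n : 0 <= hip z (e n) ^ 2 / lam n.
Proof. pose proof (lam_pos n). unfold Rdiv; apply Rmult_le_pos; [apply pow2_ge_0|left; apply Rinv_0_lt_compat; lra]. Qed.

Lemma hm1sq_fin (z : H) : (forall n, (N <= n)%nat -> hip z (e n) = 0) ->
  hm1sq e lam z = ssum (fun n => hip z (e n) ^ 2 / lam n) N.
Proof.
  intros Hz. unfold hm1sq.
  destruct (series_props (fun n => hip z (e n) ^ 2 / lam n) (ssum (fun n => hip z (e n) ^ 2 / lam n) N)) as [A B].
  - apply term_nonneg.
  - intros M. apply Rle_trans with (ssum (fun n => hip z (e n) ^ 2 / lam n) (Nat.max M N)).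
    + apply ssum_mono; [apply term_nonneg|lia].
    + right. apply ssum_zero_beyond; [|lia]. intros n Hn. rewrite Hz by auto. unfold Rdiv. ring.
  - specialize (A N). lra.
Qed.

Lemma hm1sq_ge_partial (z : H) M : ssum (fun n => hip z (e n) ^ 2 / lam n) M <= hm1sq e lam z.
Proof.
  unfold hm1sq.
  destruct (series_props (fun n => hip z (e n) ^ 2 / lam n) (hip z z / lam 0%nat)) as [A B].
  - apply term_nonneg.
  - intros M'. apply Rle_trans with (ssum (fun n => / lam 0%nat * hip z (e n) ^ 2) M').
    + apply ssum_le. intros n _. pose proof (lam_pos n). pose proof (lam_pos 0).
      pose proof (lam_ge0 lam Hl n). pose proof (pow2_ge_0 (hip z (e n))).
      unfold Rdiv. rewrite Rmult_comm. apply Rmult_le_compat_r; auto.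
      apply Rinv_le_contravar; lra.
    + rewrite ssum_scal. pose proof (parseval_partial e z M' Ho). pose proof (lam_pos 0).
      unfold Rdiv. rewrite (Rmult_comm (hip z z)). apply Rmult_le_compat_l; [left; apply Rinv_0_lt_compat; auto | auto].
  - apply A.
Qed.

Definition Xof (z : H) := ssum (fun n => hip z (e n) ^ 2 / lam n) N.

Lemma hm1sq_PN (z : H) : hm1sq e lam (PN e N z) = Xof z.
Proof.
  rewrite hm1sq_fin.
  - apply ssum_ext. intros n Hn. rewrite PN_coord by auto. destruct (Nat.ltb_spec n N); [auto|lia].
  - intros n Hn. rewrite PN_coord by auto. destruct (Nat.ltb_spec n N); [lia|auto].
Qed.

Lemma cone_Y (z : H) M : in_Kplus e lam N z ->
  ssum (fun n => if (n <? N)%nat then 0 else hip z (e n) ^ 2 / lam n) M <= Xof z.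
Proof.
  intros Hk. unfold in_Kplus, Vfun in Hk. rewrite hm1sq_PN in Hk.
  pose proof (hm1sq_ge_partial (QN e N z) M) as P.
  rewrite (ssum_ext _ (fun n => if (n <? N)%nat then 0 else hip z (e n) ^ 2 / lam n)) in P.
  - lra.
  - intros n _. rewrite QN_coord by auto. destruct (n <? N)%nat; auto. unfold Rdiv; ring.
Qed.

Lemma split_XY (z : H) M : (N <= M)%nat ->
  ssum (fun n => hip z (e n) ^ 2 / lam n) M =
  Xof z + ssum (fun n => if (n <? N)%nat then 0 else hip z (e n) ^ 2 / lam n) M.
Proof.
  intros HM. unfold Xof. rewrite <- (ssum_split _ N M HM), <- ssum_plus.
  apply ssum_ext. intros n _. destruct (n <? N)%nat; ring.
Qed.

Lemma cone_total (z : H) : in_Kplus e lam N z -> hm1sq e lam z <= 2 * Xof z.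
Proof.
  intros Hk. unfold hm1sq.
  destruct (series_props (fun n => hip z (e n) ^ 2 / lam n) (2 * Xof z)) as [_ B]; auto.
  - apply term_nonneg.
  - intros M. apply Rle_trans with (ssum (fun n => hip z (e n) ^ 2 / lam n) (Nat.max M N)).
    + apply ssum_mono; [apply term_nonneg|lia].
    + rewrite split_XY by lia. pose proof (cone_Y z (Nat.max M N) Hk). lra.
Qed.

End HM.

Lemma aux1 l Lam mu q : 0 < l -> l <= Lam -> 0 <= mu -> 0 <= q -> - (4 * Lam ^ 2 + mu * Lam) * q <= - (4 * l + 2) * (l * q) + (- 2 * ((mu - 2)/2)) * (l * q).
intros. assert ((4 * l + mu) * l <= 4 * Lam ^ 2 + mu * Lam) by nra. nra. Qed.
Lemma aux2 l mu q : 0 < l -> 0 <= q -> - (mu ^ 2 / 8) * q <= (2 * l - 2) * (l * q) + (- 2 * ((mu - 2)/2)) * (l * q).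
intros. assert (0 <= q * (2 * (l - mu / 4) ^ 2)) by (apply Rmult_le_pos; [auto| apply Rmult_le_pos; [lra|apply pow2_ge_0]]).
replace ((2 * l - 2) * (l * q) + (- 2 * ((mu - 2)/2)) * (l * q)) with (q * (2 * (l - mu / 4) ^ 2) - (mu ^ 2 / 8) * q) by field. lra. Qed.

Lemma key_ineq (w g lam : nat -> R) N M Lam L R :
 (N <= M)%nat -> 0 <= L -> 0 <= Lam -> (forall n, 0 < lam n) ->
 (forall n, (n < N)%nat -> lam n <= Lam) -> (forall n, (N <= n)%nat -> Lam <= lam n) -> 0 <= R ->
 ssum (fun n => g n ^ 2) M <= L ^ 2 * (ssum (fun n => w n ^ 2) M + R) ->
 ssum (fun n => if (n <? N)%nat then 0 else w n ^ 2 / lam n) M <= ssum (fun n => w n ^ 2 / lam n) N ->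
 - (4 * Lam ^ 2 + (2 + 2 * L ^ 2) * Lam + (2 + 2 * L ^ 2) ^ 2 / 8)
   * ssum (fun n => (if (n <? N)%nat then 2 else -1) * (w n ^ 2 / lam n)) M - 2 * L ^ 2 * R
 <= ssum (fun n => (if (n <? N)%nat then 2 else -1) * (2 * w n * (- lam n ^ 2 * w n - lam n * g n) / lam n)) M.
Proof.
  intros HNM HL HLam Hlp HlN HlN' HR Hg Hc.
  set (mu := 2 + 2 * L ^ 2).
  set (Xt := fun n => if (n <? N)%nat then w n ^ 2 / lam n else 0).
  set (Yt := fun n => if (n <? N)%nat then 0 else w n ^ 2 / lam n).
  set (A := fun n => if (n <? N)%nat then - (4 * lam n + 2) * w n ^ 2 else (2 * lam n - 2) * w n ^ 2).
  assert (S1 : ssum (fun n => A n + (-2) * g n ^ 2) M <=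
     ssum (fun n => (if (n <? N)%nat then 2 else -1) * (2 * w n * (- lam n ^ 2 * w n - lam n * g n) / lam n)) M).
  { apply ssum_le. intros n _. pose proof (Hlp n).
    replace (2 * w n * (- lam n ^ 2 * w n - lam n * g n) / lam n) with (-2 * lam n * w n ^ 2 - 2 * w n * g n) by (field; lra).
    pose proof (pow2_ge_0 (w n - g n)). pose proof (pow2_ge_0 (w n + g n)).
    unfold A. destruct (n <? N)%nat; lra. }
  rewrite ssum_plus, ssum_scal in S1.
  assert (S2 : ssum (fun n => - (4 * Lam ^ 2 + mu * Lam) * Xt n + - (mu ^ 2 / 8) * Yt n) M <=
               ssum (fun n => A n + (- 2 * L ^ 2) * w n ^ 2) M).
  { apply ssum_le. intros n _. pose proof (Hlp n).
    set (q := w n ^ 2 / lam n).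
    assert (Hq : 0 <= q) by (unfold q, Rdiv; apply Rmult_le_pos; [apply pow2_ge_0|left; apply Rinv_0_lt_compat; auto]).
    assert (Hw : w n ^ 2 = lam n * q) by (unfold q; field; lra).
    unfold A, Xt, Yt. fold q. rewrite Hw.
    assert (0 <= mu) by (unfold mu; nra).
    replace (-2 * L ^ 2) with (-2 * ((mu - 2)/2)) by (unfold mu; field).
    destruct (Nat.ltb_spec n N).
    - pose proof (aux1 (lam n) Lam mu q H (HlN n H1) H0 Hq). lra.
    - pose proof (aux2 (lam n) mu q H Hq). lra. }
  rewrite !ssum_plus, !ssum_scal in S2.
  assert (EX : ssum Xt M = ssum (fun n => w n ^ 2 / lam n) N) by (unfold Xt; apply ssum_split; auto).
  assert (EP : ssum (fun n => (if (n <? N)%nat then 2 else -1) * (w n ^ 2 / lam n)) M = 2 * ssum Xt M - ssum Yt M).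
  { rewrite (ssum_ext _ (fun n => 2 * Xt n + -1 * Yt n)).
    - rewrite ssum_plus, !ssum_scal. ring.
    - intros n _. unfold Xt, Yt. destruct (n <? N)%nat; ring. }
  assert (HY : 0 <= ssum Yt M) by (apply ssum_nonneg; intro n; unfold Yt; destruct (n <? N)%nat; [lra|];
     unfold Rdiv; apply Rmult_le_pos; [apply pow2_ge_0|left; apply Rinv_0_lt_compat; auto]).
  assert (HYX : ssum Yt M <= ssum Xt M) by (rewrite EX; exact Hc).
  rewrite EP. fold mu.
  assert (Hmu : 0 <= mu) by (unfold mu; nra).
  assert (Ha : 0 <= 4 * Lam ^ 2 + mu * Lam) by nra.
  assert (Hb : 0 <= mu ^ 2 / 8) by nra.
  clearbody mu Xt Yt A.
  set (G := ssum (fun n => g n ^ 2) M) in *. set (W := ssum (fun n => w n ^ 2) M) in *.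
  set (X := ssum Xt M) in *. set (Y := ssum Yt M) in *. set (AA := ssum A M) in *.
  set (RHS := ssum (fun n => (if (n <? N)%nat then 2 else -1) * (2 * w n * (- lam n ^ 2 * w n - lam n * g n) / lam n)) M) in *.
  set (a := 4 * Lam ^ 2 + mu * Lam) in *. set (b := mu ^ 2 / 8) in *.
  clearbody G W X Y AA RHS a b.
  assert (0 <= a * (X - Y)) by (apply Rmult_le_pos; lra).
  assert (0 <= b * (X - Y)) by (apply Rmult_le_pos; lra).
  assert (0 <= L ^ 2) by apply pow2_ge_0.
  rewrite Rmult_plus_distr_l in *. nra.
Qed.

From Coquelicot Require Derive.

Lemma cont_of_eps f x : (forall eps, 0 < eps -> exists d, 0 < d /\ forall y, Rabs (y - x) < d -> Rabs (f y - f x) < eps) ->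
  continuity_pt f x.
Proof.
  intros Hc. unfold continuity_pt, continue_in, limit1_in, limit_in. intros eps Heps.
  destruct (Hc eps Heps) as [d [Hd Hy]]. exists d. split; auto.
  intros y [_ Hyx]. simpl in *. unfold Rdist in *. apply Hy; auto.
Qed.

Lemma eps_of_cont f x : continuity_pt f x ->
  forall eps, 0 < eps -> exists d, 0 < d /\ forall y, Rabs (y - x) < d -> Rabs (f y - f x) < eps.
Proof.
  intros Hc eps Heps. unfold continuity_pt, continue_in, limit1_in, limit_in in Hc.
  destruct (Hc eps Heps) as [d [Hd Hy]]. exists d. split; auto.
  intros y Hyx. destruct (Req_dec y x) as [->|Hne].
  - rewrite Rminus_diag, Rabs_R0. auto.
  - apply (Hy y). split; [split; [exact I| auto] | exact Hyx].
Qed.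

Definition clamp (a b s : R) := Rmax a (Rmin b s).

Lemma clamp_id a b s : a <= s <= b -> clamp a b s = s.
Proof. intros. unfold clamp, Rmax, Rmin. repeat destruct Rle_dec; lra. Qed.
Lemma clamp_in a b s : a <= b -> a <= clamp a b s <= b.
Proof. intros. unfold clamp, Rmax, Rmin. repeat destruct Rle_dec; lra. Qed.
Lemma clamp_lip a b x y : a <= b -> Rabs (clamp a b y - clamp a b x) <= Rabs (y - x).
Proof. intros. unfold clamp, Rmax, Rmin. repeat destruct Rle_dec; unfold Rabs; repeat destruct Rcase_abs; lra. Qed.

Definition hcontw {H : HSpace} (a b : R) (u : R -> H) : Prop :=
  forall t, a <= t <= b -> forall eps, eps > 0 -> exists delta, delta > 0 /\
      forall s, a <= s <= b -> Rabs (s - t) < delta -> hnorm (hsub (u s) (u t)) < eps.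

Lemma hcontw_const {H : HSpace} a b (v : H) : hcontw a b (fun _ => v).
Proof.
  intros t _ eps Heps. exists 1. split; [lra|]. intros. unfold hnorm. rewrite hsub_self, hip_zero_l, sqrt_0. lra.
Qed.

Lemma hip_cont {H : HSpace} a b (u v : R -> H) : a <= b -> hcontw a b u -> hcontw a b v ->
  forall x, continuity_pt (fun s => hip (u (clamp a b s)) (v (clamp a b s))) x.
Proof.
  intros Hab Hu Hv x. apply cont_of_eps. intros eps Heps.
  set (t := clamp a b x). assert (Ht : a <= t <= b) by (apply clamp_in; auto).
  set (K := 1 + hnorm (u t) + hnorm (v t)).
  assert (HK : 1 <= K) by (unfold K; pose proof (hnorm_nonneg (u t)); pose proof (hnorm_nonneg (v t)); lra).
  set (eta := Rmin 1 (eps / (2 * K))).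
  assert (Heta : 0 < eta) by (unfold eta; apply Rmin_pos; [lra| apply Rdiv_lt_0_compat; lra]).
  destruct (Hu t Ht eta Heta) as [d1 [Hd1 H1]].
  destruct (Hv t Ht eta Heta) as [d2 [Hd2 H2]].
  exists (Rmin d1 d2). split; [apply Rmin_pos; auto|].
  intros y Hy. set (s := clamp a b y).
  assert (Hs : a <= s <= b) by (apply clamp_in; auto).
  assert (Hst : Rabs (s - t) < Rmin d1 d2) by (eapply Rle_lt_trans; [apply clamp_lip; auto| auto]).
  specialize (H1 s Hs (Rlt_le_trans _ _ _ Hst (Rmin_l _ _))).
  specialize (H2 s Hs (Rlt_le_trans _ _ _ Hst (Rmin_r _ _))).
  fold s t.
  assert (E : hip (u s) (v s) - hip (u t) (v t) =
     hip (hsub (u s) (u t)) (hsub (v s) (v t)) + hip (hsub (u s) (u t)) (v t) + hip (u t) (hsub (v s) (v t))).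
  { rewrite !hip_sub_l, !hip_sub_r. ring. }
  rewrite E.
  pose proof (CS (hsub (u s) (u t)) (hsub (v s) (v t))) as C1.
  pose proof (CS (hsub (u s) (u t)) (v t)) as C2.
  pose proof (CS (u t) (hsub (v s) (v t))) as C3.
  pose proof (hnorm_nonneg (hsub (u s) (u t))). pose proof (hnorm_nonneg (hsub (v s) (v t))).
  pose proof (hnorm_nonneg (u t)). pose proof (hnorm_nonneg (v t)).
  assert (Hle1 : eta <= 1) by apply Rmin_l.
  assert (Hle2 : eta <= eps / (2 * K)) by apply Rmin_r.
  assert (HeK : eta * K <= eps / 2) by (apply Rmult_le_reg_r with (/ K);
     [apply Rinv_0_lt_compat; lra| replace (eta * K * / K) with eta by (field; lra);
      replace (eps / 2 * / K) with (eps / (2 * K)) by (field; lra); auto]).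
  set (p := hnorm (hsub (u s) (u t))) in *. set (q := hnorm (hsub (v s) (v t))) in *.
  set (nu := hnorm (u t)) in *. set (nv := hnorm (v t)) in *.
  assert (p * q <= eta * 1) by (apply Rmult_le_compat; lra).
  assert (p * nv <= eta * nv) by (apply Rmult_le_compat_r; lra).
  assert (nu * q <= nu * eta) by (apply Rmult_le_compat_l; lra).
  unfold K in HeK.
  eapply Rle_lt_trans; [apply Rabs_triang|].
  eapply Rle_lt_trans; [apply Rplus_le_compat_r; apply Rabs_triang|].
  lra.
Qed.

Lemma dpl_ext f g x l : (forall y, f y = g y) -> derivable_pt_lim f x l -> derivable_pt_lim g x l.
Proof.
  intros Hfg Hf eps Heps. destruct (Hf eps Heps) as [d Hd]. exists d. intros h Hh Hhd.
  rewrite <- !Hfg. apply Hd; auto.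
Qed.

Lemma deriv_clamp a b f t l : a < t < b -> derivable_pt_lim f t l ->
  derivable_pt_lim (fun s => f (clamp a b s)) t l.
Proof.
  intros Ht Hf eps Heps. destruct (Hf eps Heps) as [d Hd].
  assert (Hp : 0 < Rmin d (Rmin (t - a) (b - t))) by
    (apply Rmin_pos; [apply cond_pos| apply Rmin_pos; lra]).
  exists (mkposreal _ Hp). intros h Hh Hhd. simpl in Hhd.
  assert (Hh1 : Rabs h < d) by (eapply Rlt_le_trans; [exact Hhd| apply Rmin_l]).
  assert (Hh2 : Rabs h < Rmin (t - a) (b - t)) by (eapply Rlt_le_trans; [exact Hhd| apply Rmin_r]).
  pose proof (Rmin_l (t - a) (b - t)). pose proof (Rmin_r (t - a) (b - t)).
  rewrite (clamp_id a b (t + h)), (clamp_id a b t).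
  - apply Hd; auto.
  - lra.
  - apply Rabs_def2 in Hh2. lra.
Qed.

Lemma mono_lemma a b f df : a < b ->
  (forall x, continuity_pt (fun s => f (clamp a b s)) x) ->
  (forall t, a < t < b -> derivable_pt_lim f t (df t)) ->
  (forall t, a <= t <= b -> 0 <= df t) -> f a <= f b.
Proof.
  intros Hab Hc Hd Hpos.
  destruct (Derive.MVT_gen (fun s => f (clamp a b s)) a b df) as [c [Hc1 Hc2]].
  - intros x Hx. rewrite Rmin_left, Rmax_right in Hx by lra.
    apply Derive.is_derive_Reals. apply deriv_clamp; auto.
  - intros x _. auto.
  - rewrite Rmin_left, Rmax_right in Hc1 by lra.
    rewrite !clamp_id in Hc2 by lra.
    pose proof (Hpos c Hc1). nra.
Qed.

Lemma ssum_deriv (f : nat -> R -> R) (df : nat -> R) M t :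
  (forall n, (n < M)%nat -> derivable_pt_lim (f n) t (df n)) ->
  derivable_pt_lim (fun s => ssum (fun n => f n s) M) t (ssum df M).
Proof.
  induction M; intros Hf; simpl.
  - apply (dpl_ext (fct_cte 0)); [reflexivity| apply derivable_pt_lim_const].
  - apply (dpl_ext (plus_fct (fun s => ssum (fun n => f n s) M) (f M))); [reflexivity|].
    apply derivable_pt_lim_plus; [apply IHM; intros; apply Hf; lia| apply Hf; lia].
Qed.

Lemma my_cont_ext f g x : (forall y, f y = g y) -> continuity_pt f x -> continuity_pt g x.
Proof. intros E Hf. apply cont_of_eps. intros eps Heps. destruct (eps_of_cont f x Hf eps Heps) as [d [Hd Hy]].
  exists d. split; auto. intros y Hyx. rewrite <- !E. auto. Qed.

Lemma ssum_cont (f : nat -> R -> R) M x :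
  (forall n, (n < M)%nat -> continuity_pt (f n) x) ->
  continuity_pt (fun s => ssum (fun n => f n s) M) x.
Proof.
  induction M; intros Hf; simpl.
  - apply continuity_pt_const. intros a b; reflexivity.
  - apply (my_cont_ext (plus_fct (fun s => ssum (fun n => f n s) M) (f M))); [reflexivity|].
    apply continuity_pt_plus; [apply IHM; intros; apply Hf; lia| apply Hf; lia].
Qed.

Lemma dini (Rf : nat -> R -> R) a b : a <= b ->
  (forall M M' t, (M <= M')%nat -> a <= t <= b -> Rf M' t <= Rf M t) ->
  (forall t, a <= t <= b -> forall eps, 0 < eps -> exists M, Rf M t < eps) ->
  (forall M x, continuity_pt (fun s => Rf M (clamp a b s)) x) ->
  forall eps, 0 < eps -> exists M, forall t, a <= t <= b -> Rf M t < eps.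
Proof.
  intros Hab Hmon Hpt Hc eps Heps.
  set (E := fun x => a <= x <= b /\ exists M, forall t, a <= t <= x -> Rf M t < eps).
  assert (Ea : E a).
  { split; [lra|]. destruct (Hpt a (conj (Rle_refl a) Hab) eps Heps) as [M HM].
    exists M. intros t Ht. replace t with a by lra. auto. }
  destruct (completeness E) as [s [Hub Hlub]].
  { exists b. intros x [Hx _]. lra. }
  { exists a; auto. }
  assert (Has : a <= s) by (apply Hub; auto).
  assert (Hsb : s <= b) by (apply Hlub; intros x [Hx _]; lra).
  destruct (Hpt s (conj Has Hsb) (eps / 2)) as [M0 HM0]; [lra|].
  destruct (eps_of_cont _ s (Hc M0 s) (eps / 2)) as [d [Hd Hdy]]; [lra|].
  assert (Hx : exists x, E x /\ s - d < x).
  { apply Classical_Prop.NNPP. intros Hn. assert (s <= s - d); [|lra].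
    apply Hlub. intros x Ex. destruct (Rle_dec x (s - d)); auto. exfalso. apply Hn. exists x. split; auto. lra. }
  destruct Hx as [x [[Hx1 [M1 HM1]] Hxs]].
  set (z := Rmin b (s + d / 2)).
  assert (Ez : E z).
  { split. { unfold z. apply Rmin_case_strong; intros; lra. }
    exists (Nat.max M0 M1). intros t Ht.
    destruct (Rle_dec t x).
    - apply (Rle_lt_trans _ (Rf M1 t)); [apply Hmon; [lia| lra]| apply HM1; lra].
    - assert (Hz : z <= s + d / 2) by apply Rmin_r. assert (Hz2 : z <= b) by apply Rmin_l.
      apply (Rle_lt_trans _ (Rf M0 t)); [apply Hmon; [apply Nat.le_max_l| lra]|].
      assert (Hts : Rabs (t - s) < d) by (apply Rabs_def1; lra).
      specialize (Hdy t Hts). rewrite !clamp_id in Hdy by lra.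
      apply Rabs_def2 in Hdy. lra. }
  destruct (Req_dec s b) as [Hs|Hs].
  - destruct Ez as [_ [M HM]]. exists M. intros t Ht. apply HM. unfold z.
    rewrite Rmin_left by lra. lra.
  - exfalso. assert (z <= s) by (apply Hub; auto).
    unfold z in H. revert H. apply Rmin_case_strong; intros; lra.
Qed.

Lemma dpl_eq f x l l' : derivable_pt_lim f x l -> l = l' -> derivable_pt_lim f x l'.
Proof. intros H E; subst; auto. Qed.

Lemma term_deriv (f : R -> R) t d k l : l <> 0 -> derivable_pt_lim f t d ->
  derivable_pt_lim (fun s => k * (f s ^ 2 / l)) t (k * (2 * f t * d / l)).
Proof.
  intros Hl Hf.
  apply (dpl_ext (mult_real_fct (k / l) (mult_fct f f))).
  { intros y. unfold mult_real_fct, mult_fct. field. auto. }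
  eapply dpl_eq. apply derivable_pt_lim_scal. apply derivable_pt_lim_mult; eauto.
  field. auto.
Qed.

Lemma psi_split (q : nat -> R) N M : (N <= M)%nat ->
  ssum (fun n => (if (n <? N)%nat then 2 else -1) * q n) M =
  2 * ssum q N - ssum (fun n => if (n <? N)%nat then 0 else q n) M.
Proof.
  intros HM. rewrite <- (ssum_split q N M HM).
  rewrite (ssum_ext _ (fun n => 2 * (if (n <? N)%nat then q n else 0) + -1 * (if (n <? N)%nat then 0 else q n))).
  - rewrite ssum_plus, !ssum_scal. ring.
  - intros n _. destruct (n <? N)%nat; ring.
Qed.

Lemma lam_mono lam : eigenvalue_seq lam -> forall n m, (n <= m)%nat -> lam n <= lam m.
Proof. intros [_ [Hm _]] n m Hnm. induction Hnm; [lra|]. specialize (Hm m). lra. Qed.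

Lemma clamp_cont a b x : a <= b -> continuity_pt (clamp a b) x.
Proof. intros Hab. apply cont_of_eps. intros eps Heps. exists eps. split; auto.
  intros y Hy. eapply Rle_lt_trans; [apply clamp_lip; auto| auto]. Qed.

Theorem lemma2p1 :
  forall (H : HSpace) (e : nat -> H) (lam : nat -> R) (L : R) (N : nat),
    orthonormal_basis e -> eigenvalue_seq lam -> 0 <= L ->
    exists C alpha : R, 0 < C /\ 0 < alpha /\
      forall (F : H -> H), globally_bounded F -> lipschitz_with F L ->
      forall (T : R) (u1 u2 : R -> H), 0 < T ->
        is_solution e lam F T u1 -> is_solution e lam F T u2 ->
        (forall t, -T <= t <= 0 -> in_Kplus e lam N (hsub (u1 t) (u2 t))) ->
        hm1sq e lam (hsub (u1 (-T)) (u2 (-T)))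
          <= C * exp (alpha * T) * hm1sq e lam (hsub (PN e N (u1 0)) (PN e N (u2 0))).
Proof.
  intros H e lam L N Ho Hl HL.
  set (Lam := lam N).
  assert (HLam : 0 < Lam) by apply (lam_pos lam Hl).
  set (c := 4 * Lam ^ 2 + (2 + 2 * L ^ 2) * Lam + (2 + 2 * L ^ 2) ^ 2 / 8).
  assert (Hcpos : 0 < c).
  { unfold c. assert (0 <= 2 + 2 * L ^ 2) by nra. assert (0 < Lam ^ 2) by nra. nra. }
  exists 4, c. split; [lra|]. split; [auto|].
  intros F _ HLip T u1 u2 HT [Hc1 Hd1] [Hc2 Hd2] Hcone.
  set (cn := fun n t => hip (u1 t) (e n) - hip (u2 t) (e n)).
  set (gn := fun n t => hip (F (u1 t)) (e n) - hip (F (u2 t)) (e n)).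
  set (W := fun t => hsub (u1 t) (u2 t)).
  assert (HWc : forall t n, hip (W t) (e n) = cn n t) by (intros; unfold W, cn; apply hip_sub_l).
  set (Psi := fun M t => ssum (fun n => (if (n <? N)%nat then 2 else -1) * (cn n t ^ 2 / lam n)) M).
  set (Dpsi := fun M t => ssum (fun n => (if (n <? N)%nat then 2 else -1) *
        (2 * cn n t * (- lam n ^ 2 * cn n t - lam n * gn n t) / lam n)) M).
  set (Rt := fun M t => hip (W t) (W t) - ssum (fun n => cn n t ^ 2) M).
  set (X := fun t => ssum (fun n => cn n t ^ 2 / lam n) N).
  assert (HXof : forall t, Xof e lam N (W t) = X t).
  { intros t. unfold Xof, X. apply ssum_ext. intros n _. rewrite HWc. auto. }
  assert (HRt0 : forall M t, 0 <= Rt M t).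
  { intros M t. unfold Rt. pose proof (parseval_partial e (W t) M Ho).
    rewrite (ssum_ext _ (fun n => cn n t ^ 2)) in H0 by (intros; rewrite HWc; auto). lra. }
  assert (HY : forall M t, -T <= t <= 0 ->
     ssum (fun n => if (n <? N)%nat then 0 else cn n t ^ 2 / lam n) M <= X t).
  { intros M t Ht. pose proof (cone_Y e lam N Ho Hl (W t) M (Hcone t Ht)) as P.
    rewrite HXof in P. rewrite (ssum_ext _ (fun n => if (n <? N)%nat then 0 else hip (W t) (e n) ^ 2 / lam n)); auto.
    intros n _. rewrite HWc. auto. }
  assert (HG : forall M t, ssum (fun n => gn n t ^ 2) M <= L ^ 2 * (ssum (fun n => cn n t ^ 2) M + Rt M t)).
  { intros M t. set (G := hsub (F (u1 t)) (F (u2 t))).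
    pose proof (parseval_partial e G M Ho) as P.
    rewrite (ssum_ext _ (fun n => gn n t ^ 2)) in P by (intros; unfold G, gn; rewrite hip_sub_l; auto).
    pose proof (HLip (u1 t) (u2 t)) as Lp. fold G in Lp.
    pose proof (hnorm_sq G). pose proof (hnorm_sq (hsub (u1 t) (u2 t))).
    pose proof (hnorm_nonneg G). pose proof (hnorm_nonneg (hsub (u1 t) (u2 t))).
    assert (hip G G <= L ^ 2 * hip (W t) (W t)).
    { unfold W. rewrite <- H0, <- H1. assert (0 <= L * hnorm (hsub (u1 t) (u2 t))) by nra. nra. }
    unfold Rt. lra. }
  assert (Hcont1 : hcontw (-T) 0 u1) by exact Hc1.
  assert (Hcont2 : hcontw (-T) 0 u2) by exact Hc2.
  assert (HTle : -T <= 0) by lra.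
  assert (Hccn : forall n x, continuity_pt (fun s => cn n (clamp (-T) 0 s)) x).
  { intros n x. apply (my_cont_ext (minus_fct (fun s => hip (u1 (clamp (-T) 0 s)) ((fun _ => e n) (clamp (-T) 0 s)))
                                              (fun s => hip (u2 (clamp (-T) 0 s)) ((fun _ => e n) (clamp (-T) 0 s))))).
    { intros; reflexivity. }
    apply continuity_pt_minus.
    - exact (hip_cont (-T) 0 u1 (fun _ => e n) HTle Hcont1 (hcontw_const _ _ _) x).
    - exact (hip_cont (-T) 0 u2 (fun _ => e n) HTle Hcont2 (hcontw_const _ _ _) x). }
  assert (Hcsq : forall n k x, continuity_pt (fun s => k * (cn n (clamp (-T) 0 s) ^ 2 / lam n)) x).
  { intros n k x. apply (my_cont_ext (mult_real_fct (k / lam n) (mult_fct (fun s => cn n (clamp (-T) 0 s)) (fun s => cn n (clamp (-T) 0 s))))).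
    { intros y. unfold mult_real_fct, mult_fct. pose proof (lam_pos lam Hl n). field. lra. }
    apply continuity_pt_scal, continuity_pt_mult; auto. }
  assert (HcRt : forall M x, continuity_pt (fun s => Rt M (clamp (-T) 0 s)) x).
  { intros M x. unfold Rt.
    apply (my_cont_ext (minus_fct (fun s => hip (u1 (clamp (-T) 0 s)) (u1 (clamp (-T) 0 s)) - 2 * hip (u1 (clamp (-T) 0 s)) (u2 (clamp (-T) 0 s))
                 + hip (u2 (clamp (-T) 0 s)) (u2 (clamp (-T) 0 s)))
            (fun s => ssum (fun n => 1 * (cn n (clamp (-T) 0 s) ^ 2 / 1)) M))).
    { intros y. unfold minus_fct, W. rewrite hip_sub_sub. f_equal. apply ssum_ext. intros; field. }
    apply continuity_pt_minus.
    - apply (my_cont_ext (plus_fct (minus_fct (fun s => hip (u1 (clamp (-T) 0 s)) (u1 (clamp (-T) 0 s)))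
                 (mult_real_fct 2 (fun s => hip (u1 (clamp (-T) 0 s)) (u2 (clamp (-T) 0 s)))))
                 (fun s => hip (u2 (clamp (-T) 0 s)) (u2 (clamp (-T) 0 s))))); [intros; reflexivity|].
      apply continuity_pt_plus; [apply continuity_pt_minus; [|apply continuity_pt_scal]|]; apply hip_cont; auto.
    - apply ssum_cont. intros n _.
      apply (my_cont_ext (fun s => 1 * (cn n (clamp (-T) 0 s) ^ 2 / lam n) * (lam n / 1))).
      { intros y. pose proof (lam_pos lam Hl n). field. lra. }
      apply (my_cont_ext (mult_fct (fun s => 1 * (cn n (clamp (-T) 0 s) ^ 2 / lam n)) (fun _ => lam n / 1))); [intros; reflexivity|].
      apply continuity_pt_mult; auto. apply continuity_pt_const. intros a b; reflexivity. }
  assert (Hdini : forall eps, 0 < eps -> exists M, forall t, -T <= t <= 0 -> Rt M t < eps).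
  { apply dini; auto.
    - intros M M' t HMM _. unfold Rt. pose proof (ssum_mono (fun n => cn n t ^ 2) M M' (fun n => pow2_ge_0 _) HMM). lra.
    - intros t _ eps Heps. destruct Ho as [_ Hp]. destruct (Hp (W t) eps Heps) as [N0 HN0].
      specialize (HN0 N0 (le_n _)). rewrite sum_f_R0_ssum in HN0. exists (S N0).
      unfold Rt. rewrite (ssum_ext _ (fun n => hip (W t) (e n) ^ 2)) by (intros; rewrite HWc; auto).
      unfold Rdist in HN0. apply Rabs_def2 in HN0. lra. }
  assert (Hdcn : forall n t, -T < t < 0 -> derivable_pt_lim (cn n) t (- lam n ^ 2 * cn n t - lam n * gn n t)).
  { intros n t Ht. eapply dpl_eq.
    - apply (dpl_ext (minus_fct (fun s => hip (u1 s) (e n)) (fun s => hip (u2 s) (e n)))); [intros; reflexivity|].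
      apply derivable_pt_lim_minus; [apply Hd1 | apply Hd2]; auto.
    - unfold cn, gn. ring. }
  assert (HdPsi : forall M t, -T < t < 0 -> derivable_pt_lim (Psi M) t (Dpsi M t)).
  { intros M t Ht. unfold Psi, Dpsi.
    apply (ssum_deriv (fun n s => (if (n <? N)%nat then 2 else -1) * (cn n s ^ 2 / lam n))).
    intros n _. apply term_deriv; [pose proof (lam_pos lam Hl n); lra| auto]. }
  assert (Hkey : forall M t, (N <= M)%nat -> -T <= t <= 0 -> - c * Psi M t - 2 * L ^ 2 * Rt M t <= Dpsi M t).
  { intros M t HM Ht. unfold c, Psi, Dpsi.
    apply (key_ineq (fun n => cn n t) (fun n => gn n t) lam N M Lam L (Rt M t)); auto.
    - lra.
    - apply (lam_pos lam Hl).
    - intros n Hn. apply (lam_mono lam Hl). lia.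
    - intros n Hn. apply (lam_mono lam Hl). lia. }
  assert (HPsiX : forall M t, (N <= M)%nat -> -T <= t <= 0 -> X t <= Psi M t /\ Psi M t <= 2 * X t).
  { intros M t HM Ht. unfold Psi. rewrite (psi_split (fun n => cn n t ^ 2 / lam n)) by auto.
    fold (X t). pose proof (HY M t Ht).
    assert (0 <= ssum (fun n => if (n <? N)%nat then 0 else cn n t ^ 2 / lam n) M).
    { apply ssum_nonneg. intros n. destruct (n <? N)%nat; [lra|]. apply (term_nonneg e lam Hl (W t) n) || idtac.
      pose proof (term_nonneg e lam Hl (W t) n). rewrite HWc in H1. auto. }
    lra. }
  assert (Hmain : forall eps, 0 < eps -> X (-T) <= 2 * exp (c * T) * X 0 + exp (c * T) * (2 * L ^ 2 * T) * eps).
  { intros eps Heps. destruct (Hdini eps Heps) as [M0 HM0].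
    set (M := Nat.max M0 N).
    assert (HRM : forall t, -T <= t <= 0 -> Rt M t <= eps).
    { intros t Ht. specialize (HM0 t Ht). unfold Rt in *.
      pose proof (ssum_mono (fun n => cn n t ^ 2) M0 M (fun n => pow2_ge_0 _) (Nat.le_max_l _ _)). lra. }
    assert (HNM : (N <= M)%nat) by apply Nat.le_max_r.
    set (f := fun s => exp (c * s) * Psi M s + 2 * L ^ 2 * eps * s).
    assert (Hf : f (-T) <= f 0).
    { apply (mono_lemma (-T) 0 f (fun s => exp (c * s) * (c * Psi M s + Dpsi M s) + 2 * L ^ 2 * eps)).
      - lra.
      - intros x. unfold f.
        apply (my_cont_ext (plus_fct (mult_fct (comp exp (mult_real_fct c (clamp (-T) 0)))
                 (fun s => Psi M (clamp (-T) 0 s))) (mult_real_fct (2 * L ^ 2 * eps) (clamp (-T) 0)))); [intros; reflexivity|].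
        apply continuity_pt_plus; [apply continuity_pt_mult|].
        + apply continuity_pt_comp; [apply continuity_pt_scal, clamp_cont; auto|].
          apply derivable_continuous_pt, derivable_pt_exp.
        + unfold Psi. apply (ssum_cont (fun n s => (if (n <? N)%nat then 2 else -1) * (cn n (clamp (-T) 0 s) ^ 2 / lam n))).
          intros n _. apply Hcsq.
        + apply continuity_pt_scal, clamp_cont; auto.
      - intros t Ht. unfold f.
        apply (dpl_ext (plus_fct (mult_fct (comp exp (mult_real_fct c id)) (Psi M)) (mult_real_fct (2 * L ^ 2 * eps) id)));
          [intros; reflexivity|].
        eapply dpl_eq.
        + apply derivable_pt_lim_plus; [apply derivable_pt_lim_mult|].
          * apply derivable_pt_lim_comp; [apply derivable_pt_lim_scal, derivable_pt_lim_id| apply derivable_pt_lim_exp].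
          * apply HdPsi; auto.
          * apply derivable_pt_lim_scal, derivable_pt_lim_id.
        + unfold comp, mult_real_fct, id. ring.
      - intros t Ht. pose proof (Hkey M t HNM Ht). pose proof (HRM t Ht). pose proof (HRt0 M t).
        assert (Hct : c * t <= 0) by nra.
        assert (E1 : exp (c * t) <= 1) by (rewrite <- exp_0; destruct (Rle_lt_or_eq_dec _ _ Hct) as [Hlt|Heq];
           [left; apply exp_increasing; auto| rewrite Heq; right; reflexivity]).
        assert (E2 : 0 < exp (c * t)) by apply exp_pos.
        assert (0 <= L ^ 2) by apply pow2_ge_0.
        assert (exp (c * t) * (c * Psi M t + Dpsi M t) >= exp (c * t) * (- 2 * L ^ 2 * Rt M t)) by
          (apply Rle_ge, Rmult_le_compat_l; lra).
        assert (exp (c * t) * (2 * L ^ 2 * Rt M t) <= 2 * L ^ 2 * Rt M t).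
        { assert (Hq : 0 <= 2 * L ^ 2 * Rt M t) by (apply Rmult_le_pos; [lra|auto]).
          pose proof (Rmult_le_compat_r _ _ _ Hq E1). lra. }
        assert (L ^ 2 * Rt M t <= L ^ 2 * eps) by (apply Rmult_le_compat_l; lra).
        lra. }
    unfold f in Hf. rewrite Rmult_0_r, exp_0, Rmult_0_r, Rplus_0_r, Rmult_1_l in Hf.
    destruct (HPsiX M (-T) HNM (conj (Rle_refl _) HTle)) as [A1 _].
    destruct (HPsiX M 0 HNM (conj HTle (Rle_refl _))) as [_ A2].
    assert (Eexp : exp (c * T) * exp (c * - T) = 1) by (rewrite <- exp_plus; replace (c * T + c * - T) with 0 by ring; apply exp_0).
    assert (Hp : 0 < exp (c * T)) by apply exp_pos.
    assert (B : Psi M (-T) <= exp (c * T) * (Psi M 0 + 2 * L ^ 2 * eps * T)).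
    { replace (Psi M (-T)) with (exp (c * T) * (exp (c * - T) * Psi M (-T))) by (rewrite <- Rmult_assoc, Eexp; ring).
      apply Rmult_le_compat_l; lra. }
    assert (exp (c * T) * Psi M 0 <= exp (c * T) * (2 * X 0)) by (apply Rmult_le_compat_l; lra).
    nra. }
  set (K := exp (c * T) * (2 * L ^ 2 * T)).
  assert (HK : 0 <= K) by (unfold K; apply Rmult_le_pos; [left; apply exp_pos| assert (0 <= L ^ 2) by apply pow2_ge_0; nra]).
  assert (HX : X (-T) <= 2 * exp (c * T) * X 0).
  { apply Rle_plus_epsilon. intros eps Heps.
    pose proof (Hmain (eps / (K + 1))) as P.
    assert (0 < eps / (K + 1)) by (apply Rdiv_lt_0_compat; lra).
    specialize (P H0). fold K in P.
    assert (K * (eps / (K + 1)) <= eps).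
    { unfold Rdiv. replace (K * (eps * / (K + 1))) with (eps * (K / (K + 1))) by (field; lra).
      assert (K / (K + 1) <= 1) by (apply Rmult_le_reg_r with (K + 1); [lra|]; unfold Rdiv; rewrite Rmult_assoc, Rinv_l; lra).
      assert (0 <= K / (K + 1)) by (apply Rdiv_le_0_compat; lra) || (unfold Rdiv; apply Rmult_le_pos; [lra| left; apply Rinv_0_lt_compat; lra]).
      nra. }
    lra. }
  pose proof (cone_total e lam N Ho Hl (W (-T)) (Hcone (-T) (conj (Rle_refl _) HTle))) as CT.
  rewrite HXof in CT.
  pose proof (hm1sq_ge_partial e lam Ho Hl (hsub (PN e N (u1 0)) (PN e N (u2 0))) N) as RP.
  rewrite (ssum_ext _ (fun n => cn n 0 ^ 2 / lam n)) in RP.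
  2:{ intros n Hn. rewrite hip_sub_l, !PN_coord by auto. destruct (Nat.ltb_spec n N); [|lia]. reflexivity. }
  fold (X 0) in RP. unfold W in CT.
  assert (Hp : 0 < exp (c * T)) by apply exp_pos.
  assert (exp (c * T) * X 0 <= exp (c * T) * hm1sq e lam (hsub (PN e N (u1 0)) (PN e N (u2 0)))) by (apply Rmult_le_compat_l; lra).
  lra.
Qed.
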